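(* For every rooted tree $T$: $\mathcal{P}(T;1,1)$ is the number of maximal antichains of $T$; $\mathcal{P}(T;x,0)=x^{m}$ where $m$ is the number of leaves of $T$; $\mathcal{P}(T;0,1)$ is the number of maximal antichains of $T$ containing no leaves; $\mathcal{P}(T;2,1)$ is the number of antichains of $T$ (including the empty set); $\mathcal{P}(T;1,2)$ is the number of cutsets of $T$; $\mathcal{P}(T;2,2)=2^{|T|}$.
   Context: For a rooted tree $T$ with root $r$, the branches $T_1,\dots,T_k$ are the subtrees obtained by deleting $r$, each rooted at the neighbour of $r$ it contains; $|T|$ is the number of vertices. The polynomial $\mathcal{P}(T;x,y)$ is defined recursively by $\mathcal{P}(T;x,y)=x$ if $T$ has a single vertex, and otherwise $\mathcal{P}(T;x,y)=\prod_{i=1}^k\mathcal{P}(T_i;x,y)+y^{|T|-1}$. An antichain in $T$ is a set of vertices no two of which lie on a common path starting at the root; a maximal antichain is one not properly contained in another antichain. A leaf is a vertex with no children. A cutset (transversal) is a set of vertices meeting every path from the root to a leaf. *)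

(* Defs.v *)
From HB Require Import structures.
From mathcomp Require Import all_boot all_order all_algebra.
Set Implicit Arguments. Unset Strict Implicit. Unset Printing Implicit Defensive.
Import GRing.Theory.

Inductive rtree : Type := Node of seq rtree.

Fixpoint tsize (t : rtree) : nat :=
  match t with
  | Node ts => ((fix aux (l : seq rtree) : nat :=
                  match l with [::] => 0 | s :: r => (tsize s + aux r) end) ts).+1
  end.

Local Open Scope ring_scope.

(* The polynomial P(T;x,y), evaluated at x y in a commutative ring R.
   The polynomial itself in Z[x,y] is the instance R = {poly {poly int}}. *)
Fixpoint Pev (R : comNzRingType) (x y : R) (t : rtree) : R :=
  match t with
  | Node [::] => x
  | Node ts => (fix prodP (l : seq rtree) : R :=
                  match l with [::] => 1 | s :: r => Pev x y s * prodP r end) ts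
               + y ^+ (tsize t).-1
  end.

(* Vertices are addresses: the root is [::]; the i-th child (0-based) of the
   vertex u is rcons u i. *)
Fixpoint vlist (t : rtree) : seq (seq nat) :=
  match t with
  | Node ts => [::] :: (fix aux (i : nat) (l : seq rtree) : seq (seq nat) :=
                         match l with
                         | [::] => [::]
                         | s :: r => map (cons i) (vlist s) ++ aux i.+1 r
                         end) 0%N ts
  end.

Definition vert (t : rtree) : finType := seq_sub (vlist t).

Definition anc (t : rtree) (u v : vert t) : bool := prefix (val u) (val v).

Definition antichain (t : rtree) (A : {set vert t}) : bool :=
  [forall u in A, forall v in A, (u != v) ==> ~~ anc u v].

Definition maximal_antichain (t : rtree) (A : {set vert t}) : bool :=
  maxset (@antichain t) A.

Definition child (t : rtree) (u v : vert t) : bool :=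
  anc u v && (size (val v) == (size (val u)).+1).

Definition leaf (t : rtree) (u : vert t) : bool := [forall v, ~~ child u v].

Definition cutset (t : rtree) (A : {set vert t}) : bool :=
  [forall l, leaf l ==> [exists v in A, anc v l]].

(* Main.v *)
Require Import Defs.
From HB Require Import structures.
From mathcomp Require Import all_boot all_order all_algebra.
Import GRing.Theory.
Set Implicit Arguments. Unset Strict Implicit. Unset Printing Implicit Defensive.

Fixpoint subs {T : Type} (s : seq T) : seq (seq T) :=
  if s is x :: s' then map (cons x) (subs s') ++ subs s' else [:: [::]].

Section Subs.
Variable T : eqType.
Implicit Types s a : seq T.

Lemma subs_subseq s a : a \in subs s -> subseq a s.
Proof.
elim: s a => [|x s IH] a /=; first by rewrite inE => /eqP ->.
rewrite mem_cat => /orP[/mapP[a' /IH H ->]|/IH H] /=; first by rewrite eqxx.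
exact: (subseq_trans H (subseq_cons s x)).
Qed.

Lemma subs_sub s a : a \in subs s -> {subset a <= s}.
Proof. by move/subs_subseq/mem_subseq. Qed.

Lemma filter_subs p s : filter p s \in subs s.
Proof.
elim: s => [|x s IH] /=; first by rewrite inE.
by case: (p x); rewrite mem_cat ?IH ?orbT // map_f.
Qed.

Lemma size_subs s : size (subs s) = 2 ^ size s.
Proof. by elim: s => [|x s IH] //=; rewrite size_cat size_map IH expnS mul2n addnn. Qed.

Lemma count_nil_subs s : count (pred1 [::]) (subs s) = 1%N.
Proof.
elim: s => [|x s IH] //=; rewrite count_cat count_map IH.
by rewrite (eq_count (a2 := pred0)) ?count_pred0.
Qed.

Lemma subs_inj s a b : uniq s -> a \in subs s -> b \in subs s -> a =i b -> a = b.
Proof.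
move=> Us Ha Hb E.
have -> := (elimT (subseq_uniqP Us) (subs_subseq Ha)).
have -> := (elimT (subseq_uniqP Us) (subs_subseq Hb)).
by apply: eq_filter => x; rewrite /= E.
Qed.

End Subs.

Lemma subs_cat_map (A B : Type) (f : A -> B) W V :
  subs (map f W ++ V) = flatten [seq [seq map f b ++ c | c <- subs V] | b <- subs W].
Proof.
elim: W => [|w W IH] /=; first by rewrite cats0 map_id.
rewrite IH map_cat flatten_cat map_flatten -map_comp; congr (flatten _ ++ _).
rewrite -[RHS]map_comp; apply: eq_map => b /=; rewrite -map_comp.
by apply: eq_map.
Qed.
Lemma count_pairs (A B : eqType) (C : Type) (X : seq A) (Y : seq B) (g : A -> B -> C) Q p q :
  (forall x y, x \in X -> y \in Y -> Q (g x y) = p x && q y) ->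
  count Q (flatten [seq [seq g x y | y <- Y] | x <- X]) = (count p X * count q Y)%N.
Proof.
elim: X => [|x X IH] H //=.
rewrite count_cat IH; last by move=> x' y Hx Hy; apply: H; rewrite // inE Hx orbT.
rewrite count_map mulnDl; congr (_ + _)%N.
rewrite (@eq_in_count _ _ (fun y => p x && q y)); last by move=> y Hy; apply: H; rewrite ?inE ?eqxx.
by case: (p x); rewrite /= ?mul1n ?mul0n ?count_pred0 //; apply: eq_count.
Qed.

Fixpoint vaux (i : nat) (l : seq rtree) : seq (seq nat) :=
  match l with [::] => [::] | s :: r => map (cons i) (vlist s) ++ vaux i.+1 r end.
Lemma vlistE ts : vlist (Node ts) = [::] :: vaux 0 ts. Proof. by []. Qed.

Fixpoint tsum (l : seq rtree) : nat :=
  match l with [::] => 0%N | s :: r => (Defs.tsize s + tsum r)%N end.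
Lemma tsizeE ts : Defs.tsize (Node ts) = (tsum ts).+1. Proof. by []. Qed.

Section ProdP.
Variables (R : comNzRingType) (x y : R).
Fixpoint prodP (l : seq rtree) : R :=
  match l with [::] => 1%R | s :: r => (Pev x y s * prodP r)%R end.
End ProdP.
Lemma PevE (R : comNzRingType) (x y : R) s r :
  Pev x y (Node (s :: r)) = (prodP x y (s :: r) + y ^+ (tsum (s :: r)))%R.
Proof. by []. Qed.
Lemma Pev0 (R : comNzRingType) (x y : R) : Pev x y (Node [::]) = x.
Proof. by []. Qed.
Lemma prodPE (R : comNzRingType) (x y : R) l : prodP x y l = (\prod_(s <- l) Pev x y s)%R.
Proof. by elim: l => [|s l IH] /=; rewrite ?big_nil ?big_cons ?IH. Qed.

Definition Fall (P : rtree -> Prop) l := foldr (fun s acc => P s /\ acc) True l.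
Definition rtree_ind2 (P : rtree -> Prop) (H : forall ts, Fall P ts -> P (Node ts)) :
  forall t, P t :=
  fix f t := match t with Node ts => H ts ((fix g l := match l return Fall P l with
     [::] => I | s :: r => conj (f s) (g r) end) ts) end.

Definition headP i (x : seq nat) := if x is j :: _ then (i <= j)%N else false.

Lemma vaux_head i ts : all (headP i) (vaux i ts).
Proof.
elim: ts i => [|s r IH] i //=; rewrite all_cat all_map.
apply/andP; split; first by apply/allP => x _ /=.
by apply: sub_all (IH i.+1) => -[|j x] //= /ltnW.
Qed.

Lemma tsumE l : tsum l = (\sum_(s <- l) Defs.tsize s)%N.
Proof. by elim: l => [|s l IH] /=; rewrite ?big_nil ?big_cons ?IH. Qed.

Lemma size_vlist t : size (vlist t) = Defs.tsize t.
Proof.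
elim/rtree_ind2: t => ts H; rewrite vlistE tsizeE /=; congr S.
elim: ts H 0%N => [|s r IH] //= [Hs Hr] i.
by rewrite size_cat size_map Hs IH.
Qed.

Lemma nil_vlist t : [::] \in vlist t.
Proof. by case: t => ts; rewrite vlistE inE eqxx. Qed.

Lemma uniq_vlist t : uniq (vlist t).
Proof.
elim/rtree_ind2: t => ts H; rewrite vlistE /=.
apply/andP; split.
  by apply/negP => /(allP (vaux_head 0 ts)).
elim: ts H 0%N => [|s r IH] //= [Hs Hr] i.
rewrite cat_uniq map_inj_uniq ?Hs ?IH //=; last by move=> x y [].
rewrite andbT; apply/hasPn => x /(allP (vaux_head i.+1 r)).
case: x => [|j x] //= Hj; apply/mapP => -[y _ [E _]].
by move: Hj; rewrite E ltnn.
Qed.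

Definition antiL (a : seq (seq nat)) :=
  all (fun x => all (fun y => (x != y) ==> ~~ prefix x y) a) a.
Definition coverL (V a : seq (seq nat)) :=
  all (fun v => has (fun u => prefix u v || prefix v u) a) V.
Definition leafL (V : seq (seq nat)) (x : seq nat) :=
  all (fun y => ~~ (prefix x y && (size y == (size x).+1))) V.
Definition cutL (V a : seq (seq nat)) :=
  all (fun l => leafL V l ==> has (fun v => prefix v l) a) V.
Definition nlL (V a : seq (seq nat)) := all (fun x => ~~ leafL V x) a.

Lemma hd_neq i u x : headP i.+1 x -> prefix (i :: u) x = false /\ prefix x (i :: u) = false.
Proof.
case: x => [|j x] //= Hj.
have H : i != j by rewrite neq_ltn Hj.
by rewrite (negbTE H) eq_sym (negbTE H).
Qed.

Arguments prefix : simpl never.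

Section Split.
Variables (i : nat) (W V2 b c : seq (seq nat)).
Hypothesis HV2 : all (headP i.+1) V2.
Hypothesis Hc : {subset c <= V2}.

Let Hpc u y : y \in c -> prefix (i :: u) y = false /\ prefix y (i :: u) = false.
Proof. by move=> /Hc /(allP HV2); apply: hd_neq. Qed.
Let HpV u y : y \in V2 -> prefix (i :: u) y = false /\ prefix y (i :: u) = false.
Proof. by move=> /(allP HV2); apply: hd_neq. Qed.

Lemma antiL_split : antiL (map (cons i) b ++ c) = antiL b && antiL c.
Proof.
rewrite /antiL all_cat !all_map; congr andb.
  apply: eq_all => x /=; rewrite all_cat all_map.
  rewrite (eq_all (a2 := fun y => (x != y) ==> ~~ prefix x y)); last first.
    by move=> y /=; rewrite eqseq_cons eqxx prefix_cons eqxx.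
  rewrite (@eq_in_all _ _ predT c) ?all_predT ?andbT // => y /Hpc.
  by case/(_ x) => -> _; rewrite implybT.
apply: eq_in_all => x Hx; rewrite all_cat all_map.
rewrite (@eq_in_all _ _ predT b) ?all_predT // => y _.
by case: (Hpc y Hx) => _ H; apply/implyP => _; apply/negP; rewrite H.
Qed.

Lemma coverL_split : coverL (map (cons i) W ++ V2) (map (cons i) b ++ c) =
  coverL W b && coverL V2 c.
Proof.
rewrite /coverL all_cat all_map; congr andb.
  apply: eq_all => x /=; rewrite has_cat has_map.
  rewrite (@eq_in_has _ _ pred0 c) ?has_pred0 ?orbF; last first.
    by move=> y /Hpc; case/(_ x) => -> ->.
  by apply: eq_has => y /=; rewrite ?prefix_cons ?eqxx.
apply: eq_in_all => x Hx; rewrite has_cat has_map.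
rewrite (@eq_in_has _ _ pred0 b) ?has_pred0 //= => y _.
by case: (HpV y Hx) => -> ->.
Qed.

Lemma leafL_split1 u : leafL (map (cons i) W ++ V2) (i :: u) = leafL W u.
Proof.
rewrite /leafL all_cat all_map.
rewrite (@eq_in_all _ _ predT V2) ?all_predT ?andbT; last first.
  by move=> y /HpV; case/(_ u) => -> _.
by apply: eq_all => y /=; rewrite ?prefix_cons ?eqxx.
Qed.

Lemma leafL_split2 x : x \in V2 -> leafL (map (cons i) W ++ V2) x = leafL V2 x.
Proof.
move=> Hx; rewrite /leafL all_cat all_map.
rewrite (@eq_in_all _ _ predT W) ?all_predT //= => y _.
by case: (HpV y Hx) => _ ->.
Qed.

Lemma cutL_split : {subset b <= W} -> cutL (map (cons i) W ++ V2) (map (cons i) b ++ c) =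
  cutL W b && cutL V2 c.
Proof.
move=> Hb; rewrite /cutL all_cat all_map; congr andb.
  apply: eq_all => x /=; rewrite leafL_split1 has_cat has_map.
  rewrite (@eq_in_has _ _ pred0 c) ?has_pred0 ?orbF; last first.
    by move=> y /Hpc; case/(_ x) => _ ->.
  by congr implb; apply: eq_has => y /=; rewrite ?prefix_cons ?eqxx.
apply: eq_in_all => x Hx; rewrite leafL_split2 // has_cat has_map.
rewrite (@eq_in_has _ _ pred0 b) ?has_pred0 //= => y _.
by case: (HpV y Hx) => -> _.
Qed.

Lemma nlL_split : nlL (map (cons i) W ++ V2) (map (cons i) b ++ c) = nlL W b && nlL V2 c.
Proof.
rewrite /nlL all_cat all_map; congr andb.
  by apply: eq_all => x /=; rewrite leafL_split1.
by apply: eq_in_all => x /Hc Hx; rewrite leafL_split2.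
Qed.

Lemma countleaf_split : count (leafL (map (cons i) W ++ V2)) (map (cons i) W ++ V2) =
  (count (leafL W) W + count (leafL V2) V2)%N.
Proof.
rewrite count_cat count_map; congr addn.
  by apply: eq_count => x /=; rewrite leafL_split1.
by apply: eq_in_count => x Hx; rewrite /= leafL_split2.
Qed.

End Split.

Lemma uniq_subs (T : eqType) (s : seq T) : uniq s -> uniq (subs s).
Proof.
elim: s => [|x s IH] //= /andP[Hx Us].
rewrite cat_uniq map_inj_uniq ?IH //=; last by move=> a b [].
rewrite andbT; apply/hasPn => a Ha; apply/mapP => -[b _ E].
by move: Hx; rewrite (subs_sub Ha (x := x)) // E inE eqxx.
Qed.

Lemma size_vaux ts i : size (vaux i ts) = tsum ts.
Proof. by elim: ts i => [|s r IH] i //=; rewrite size_cat size_map size_vlist IH. Qed.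

Lemma forest_count (Q : seq (seq nat) -> seq (seq nat) -> bool) :
  Q [::] [::] ->
  (forall i W V2 b c, all (headP i.+1) V2 -> {subset b <= W} -> {subset c <= V2} ->
     Q (map (cons i) W ++ V2) (map (cons i) b ++ c) = Q W b && Q V2 c) ->
  forall ts i, count (Q (vaux i ts)) (subs (vaux i ts)) =
     (\prod_(s <- ts) count (Q (vlist s)) (subs (vlist s)))%N.
Proof.
move=> Q0 HQ; elim=> [|s r IH] i /=; first by rewrite big_nil /= Q0.
rewrite big_cons -(IH i.+1) subs_cat_map.
apply: count_pairs => b c Hb Hc; apply: HQ; first exact: vaux_head.
  exact: subs_sub Hb.
exact: subs_sub Hc.
Qed.

Lemma forest_leaves ts i : count (leafL (vaux i ts)) (vaux i ts) =
   (\sum_(s <- ts) count (leafL (vlist s)) (vlist s))%N.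
Proof.
elim: ts i => [|s r IH] i /=; first by rewrite big_nil.
by rewrite big_cons countleaf_split ?IH //; apply: vaux_head.
Qed.

Arguments leafL : simpl never.
Arguments antiL : simpl never.
Arguments coverL : simpl never.
Arguments cutL : simpl never.
Arguments nlL : simpl never.

Section Root.
Variable F : seq (seq nat).
Hypothesis HF1 : all (headP 0) F.
Hypothesis HF2 : [:: 0%N] \in F.
Variable a : seq (seq nat).
Hypothesis Ha : {subset a <= F}.

Let Fnil x : x \in F -> x != [::].
Proof. by move/(allP HF1); case: x. Qed.

Lemma R1 : antiL ([::] :: a) = (a == [::]).
Proof.
case: a Ha => [|y a'] Ha' //=.
have Hy : y != [::] by apply: Fnil; apply: Ha'; rewrite inE eqxx.
rewrite /antiL /= prefix0s /= Hy /=.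
by rewrite eq_sym Hy.
Qed.

Lemma R2 : coverL ([::] :: F) ([::] :: a) = true.
Proof. by apply/allP => v _; rewrite /= prefix0s. Qed.

Lemma R3 : leafL ([::] :: F) [::] = false.
Proof.
apply/negbTE/allPn; exists [:: 0%N]; first by rewrite inE HF2 orbT.
by rewrite prefix0s.
Qed.

Lemma R4 x : x \in F -> leafL ([::] :: F) x = leafL F x.
Proof.
by move=> /Fnil; case: x => [|j x].
Qed.

Lemma R5 : coverL ([::] :: F) a = coverL F a.
Proof.
rewrite /coverL /=; case E: (all _ F); rewrite ?andbF ?andbT //.
have := allP E _ HF2; case: (a) => [|y a'] //= _.
by rewrite prefix0s orbT.
Qed.

Lemma R6 : cutL ([::] :: F) ([::] :: a) = true.
Proof. by apply/allP => v _; rewrite /= prefix0s implybT. Qed.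

Lemma R7 : cutL ([::] :: F) a = cutL F a.
Proof.
rewrite /cutL /= R3 /=; apply: eq_in_all => x Hx.
by rewrite R4.
Qed.

Lemma R8 : nlL ([::] :: F) a = nlL F a.
Proof. by apply: eq_in_all => x /Ha Hx; rewrite /= R4. Qed.

End Root.

Lemma F_head s r : all (headP 0) (vaux 0 (s :: r)).
Proof. exact: vaux_head. Qed.
Lemma F_mem s r : [:: 0%N] \in vaux 0 (s :: r).
Proof. by rewrite /= mem_cat map_f ?nil_vlist. Qed.

Definition cnt (Q : seq (seq nat) -> seq (seq nat) -> bool) t :=
  count (Q (vlist t)) (subs (vlist t)).
Definition Qanti (V a : seq (seq nat)) := antiL a.
Definition Qmax (V a : seq (seq nat)) := antiL a && coverL V a.
Definition Qmnl (V a : seq (seq nat)) := antiL a && coverL V a && nlL V a.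
Definition Qcut (V a : seq (seq nat)) := cutL V a.

Lemma split_anti i W V2 b c : all (headP i.+1) V2 -> {subset b <= W} -> {subset c <= V2} ->
  Qanti (map (cons i) W ++ V2) (map (cons i) b ++ c) = Qanti W b && Qanti V2 c.
Proof. by move=> H1 H2 H3; rewrite /Qanti (antiL_split b H1 H3). Qed.
Lemma split_max i W V2 b c : all (headP i.+1) V2 -> {subset b <= W} -> {subset c <= V2} ->
  Qmax (map (cons i) W ++ V2) (map (cons i) b ++ c) = Qmax W b && Qmax V2 c.
Proof. by move=> H1 H2 H3; rewrite /Qmax (antiL_split b H1 H3) (coverL_split W b H1 H3) andbACA. Qed.
Lemma split_mnl i W V2 b c : all (headP i.+1) V2 -> {subset b <= W} -> {subset c <= V2} ->
  Qmnl (map (cons i) W ++ V2) (map (cons i) b ++ c) = Qmnl W b && Qmnl V2 c.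
Proof.
move=> H1 H2 H3; rewrite /Qmnl (antiL_split b H1 H3) (coverL_split W b H1 H3) (nlL_split W b H1 H3).
by move: (antiL b) (antiL c) (coverL W b) (coverL V2 c) (nlL W b) (nlL V2 c) => [] [] [] [] [] [].
Qed.
Lemma split_cut i W V2 b c : all (headP i.+1) V2 -> {subset b <= W} -> {subset c <= V2} ->
  Qcut (map (cons i) W ++ V2) (map (cons i) b ++ c) = Qcut W b && Qcut V2 c.
Proof. by move=> H1 H2 H3; rewrite /Qcut (cutL_split H1 H3 H2). Qed.

Lemma subs_cons (T : Type) (x : T) s : subs (x :: s) = map (cons x) (subs s) ++ subs s.
Proof. by []. Qed.

Lemma cnt_anti s r : cnt Qanti (Node (s :: r)) =
  (1 + \prod_(u <- s :: r) cnt Qanti u)%N.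
Proof.
rewrite /cnt vlistE subs_cons count_cat count_map -(@forest_count Qanti isT split_anti (s :: r) 0).
congr addn; rewrite -(count_nil_subs (vaux 0 (s :: r))); apply: eq_in_count => a Ha.
have H1 := F_head s r; have H2 := F_mem s r; have H3 := subs_sub Ha.
by rewrite /= /Qanti (R1 H1 H3).
Qed.

Lemma cnt_max s r : cnt Qmax (Node (s :: r)) =
  (1 + \prod_(u <- s :: r) cnt Qmax u)%N.
Proof.
have H1 := F_head s r; have H2 := F_mem s r.
rewrite /cnt vlistE subs_cons count_cat count_map -(@forest_count Qmax isT split_max (s :: r) 0).
congr addn.
  rewrite -(count_nil_subs (vaux 0 (s :: r))); apply: eq_in_count => a Ha.
  have H3 := subs_sub Ha.
  by rewrite /= /Qmax (R1 H1 H3) R2 andbT.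
apply: eq_in_count => a Ha; have H3 := subs_sub Ha.
by rewrite /Qmax (R5 H2).
Qed.

Lemma cnt_mnl s r : cnt Qmnl (Node (s :: r)) =
  (1 + \prod_(u <- s :: r) cnt Qmnl u)%N.
Proof.
have H1 := F_head s r; have H2 := F_mem s r.
rewrite /cnt vlistE subs_cons count_cat count_map -(@forest_count Qmnl isT split_mnl (s :: r) 0).
congr addn.
  rewrite -(count_nil_subs (vaux 0 (s :: r))); apply: eq_in_count => a Ha.
  have H3 := subs_sub Ha.
  rewrite /= /Qmnl (R1 H1 H3) R2; case: eqP => // ->.
  by rewrite /nlL /= (R3 H2).
apply: eq_in_count => a Ha; have H3 := subs_sub Ha.
by rewrite /Qmnl (R5 H2) (R8 H1 H3).
Qed.

Lemma cnt_cut s r : cnt Qcut (Node (s :: r)) =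
  (2 ^ tsum (s :: r) + \prod_(u <- s :: r) cnt Qcut u)%N.
Proof.
have H1 := F_head s r; have H2 := F_mem s r.
rewrite /cnt vlistE subs_cons count_cat count_map -(@forest_count Qcut isT split_cut (s :: r) 0).
congr addn.
  rewrite -(size_vaux (s :: r) 0) -size_subs -count_predT.
  apply: eq_in_count => a Ha; have H3 := subs_sub Ha.
  by rewrite /= /Qcut R6.
apply: eq_in_count => a Ha; have H3 := subs_sub Ha.
by rewrite /Qcut (R7 H1 H2).
Qed.

Lemma leaves_root s r : count (leafL (vlist (Node (s :: r)))) (vlist (Node (s :: r))) =
  (\sum_(u <- s :: r) count (leafL (vlist u)) (vlist u))%N.
Proof.
have H1 := F_head s r; have H2 := F_mem s r.
rewrite vlistE /= (R3 H2) add0n -(forest_leaves (s :: r) 0).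
by apply: eq_in_count => x Hx; rewrite /= (R4 H1 Hx).
Qed.

Section Bridge.
Variable t : rtree.
Local Notation V := (vlist t).

Definition toSet (a : seq (seq nat)) : {set vert t} := [set v : vert t | val v \in a].

Lemma card_sets (Q : {set vert t} -> bool) :
  #|[set A | Q A]| = count (fun a => Q (toSet a)) (subs V).
Proof.
have UV := uniq_vlist t.
rewrite cardsE -sum1_card.
have P : perm_eq (index_enum {set vert t}) (map toSet (subs V)).
  apply: uniq_perm; first exact: index_enum_uniq.
    rewrite map_inj_in_uniq ?uniq_subs // => a b Ha Hb E.
    apply: (subs_inj UV Ha Hb) => x.
    case Hx: (x \in V); last first.
      have Na : x \notin a by apply/negP => /(subs_sub Ha); rewrite Hx.
      have Nb : x \notin b by apply/negP => /(subs_sub Hb); rewrite Hx.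
      by rewrite (negbTE Na) (negbTE Nb).
    have := congr1 (fun A : {set vert t} => (SeqSub Hx : vert t) \in A) E.
    by rewrite /toSet !inE.
  move=> A; rewrite mem_index_enum; symmetry; apply/mapP.
  exists (filter (fun x => x \in map val (enum A)) V); first exact: filter_subs.
  apply/setP => v; rewrite inE mem_filter (valP v) andbT.
  by rewrite (mem_map val_inj) mem_enum.
by rewrite (perm_big _ P) big_map sum1_count.
Qed.

Section Conv.
Variable a : seq (seq nat).
Hypothesis Ha : {subset a <= V}.

Lemma forall_toSet (P : vert t -> bool) (p : pred (seq nat)) :
  (forall u, P u = p (val u)) -> [forall u in toSet a, P u] = all p a.
Proof.
move=> HP; apply/forallP/allP => [H x Hx | H u].
  have Hv := Ha Hx.
  by have := H (SeqSub Hv : vert t); rewrite inE HP /= Hx.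
by apply/implyP; rewrite inE HP => /H.
Qed.

Lemma exists_toSet (P : vert t -> bool) (p : pred (seq nat)) :
  (forall u, P u = p (val u)) -> [exists u in toSet a, P u] = has p a.
Proof.
move=> HP; apply/existsP/hasP => [[u /andP[Hu Pu]] | [x Hx px]].
  by exists (val u); [move: Hu; rewrite inE | rewrite -HP].
have Hv := Ha Hx.
by exists (SeqSub Hv : vert t); rewrite inE /= Hx HP.
Qed.
End Conv.

Lemma forall_vert (P : vert t -> bool) (p : pred (seq nat)) :
  (forall u, P u = p (val u)) -> [forall u, P u] = all p V.
Proof.
move=> HP; apply/forallP/allP => [H x Hx | H u].
  by have := H (SeqSub Hx : vert t); rewrite HP.
by rewrite HP; apply: H; apply: valP.
Qed.

Lemma leafE (u : vert t) : leaf u = leafL V (val u).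
Proof. by apply: forall_vert. Qed.

Lemma antichainE (A : {set vert t}) : antichain A =
  [forall u in A, forall v in A, (u != v) ==> ~~ anc u v].
Proof. by []. Qed.

Lemma antiP (A : {set vert t}) u v : antichain A -> u \in A -> v \in A -> u != v -> ~~ anc u v.
Proof.
move=> /forallP /(_ u) /implyP H Hu Hv Huv.
by have /forallP /(_ v) /implyP /(_ Hv) /implyP /(_ Huv) := H Hu.
Qed.

Lemma maxE (A : {set vert t}) : maximal_antichain A =
  antichain A && [forall v, [exists u in A, anc u v || anc v u]].
Proof.
apply/maxsetP/andP => [[HA Hmax] | [HA Hcov]].
  split => //; apply/forallP => v.
  case: (boolP [exists u in A, anc u v || anc v u]) => // Hn; exfalso.
  rewrite negb_exists in Hn.
  have Hn' u : u \in A -> ~~ anc u v && ~~ anc v u.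
    by move=> Hu; have := forallP Hn u; rewrite Hu /= negb_or.
  have HvA : v \notin A.
    by apply/negP => Hv; have := Hn' v Hv; rewrite /anc prefix_refl.
  suff HB : antichain (v |: A).
    have := Hmax _ HB (subsetUr _ _) => E.
    by move: HvA; rewrite -E setU11.
  apply/forallP => x; apply/implyP; rewrite in_setU1 => /orP[/eqP->|Hx];
  apply/forallP => y; apply/implyP; rewrite in_setU1 => /orP[/eqP->|Hy];
  apply/implyP => Hxy.
  - by rewrite eqxx in Hxy.
  - by case/andP: (Hn' y Hy).
  - by case/andP: (Hn' x Hx).
  - exact: (antiP HA Hx Hy Hxy).
split => // B HB HAB; apply/eqP; rewrite eqEsubset HAB andbT.
apply/subsetP => v Hv.
have /existsP [u /andP [Hu Hc]] := forallP Hcov v.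
have HuB := subsetP HAB u Hu.
case: (eqVneq u v) => [<- // | Huv].
move: Hc; rewrite (negbTE (antiP HB HuB Hv Huv)) /=.
by rewrite eq_sym in Huv; rewrite (negbTE (antiP HB Hv HuB Huv)).
Qed.

Section Conv2.
Variable a : seq (seq nat).
Hypothesis Ha : {subset a <= V}.

Lemma antichain_toSet : antichain (toSet a) = antiL a.
Proof.
rewrite /antichain; apply: forall_toSet => // u.
by apply: forall_toSet => // v.
Qed.

Lemma cover_toSet : [forall v, [exists u in toSet a, anc u v || anc v u]] = coverL V a.
Proof.
apply: forall_vert => v; apply: exists_toSet => // u.
Qed.

Lemma max_toSet : maximal_antichain (toSet a) = Qmax V a.
Proof. by rewrite maxE antichain_toSet cover_toSet. Qed.

Lemma nl_toSet : [forall u in toSet a, ~~ leaf u] = nlL V a.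
Proof. by apply: forall_toSet => // u; rewrite leafE. Qed.

Lemma cut_toSet : cutset (toSet a) = cutL V a.
Proof.
apply: forall_vert => l; rewrite leafE; congr implb.
by apply: exists_toSet.
Qed.
End Conv2.

Lemma card_leaves : #|[set u : vert t | leaf u]| = count (leafL V) V.
Proof.
have P : perm_eq (map val (index_enum (vert t))) V.
  apply: uniq_perm; last 1 first.
  - move=> x; apply/mapP/idP => [[u _ ->]|Hx]; first exact: valP.
    by exists (SeqSub Hx : vert t); rewrite ?mem_index_enum.
  - by rewrite map_inj_uniq ?index_enum_uniq //; apply: val_inj.
  - exact: uniq_vlist.
rewrite cardsE -sum1_card -sum1_count -(perm_big _ P) big_map.
by apply: eq_bigl => u; rewrite -leafE.
Qed.

Lemma card_max : #|[set A : {set vert t} | maximal_antichain A]| = cnt Qmax t.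
Proof. by rewrite card_sets; apply: eq_in_count => a /subs_sub Ha; rewrite /= max_toSet. Qed.

Lemma card_mnl : (#|[set A : {set vert t} | maximal_antichain A & [forall u in A, ~~ leaf u]]|)
  = cnt Qmnl t.
Proof.
rewrite card_sets; apply: eq_in_count => a /subs_sub Ha.
by rewrite /= max_toSet // nl_toSet.
Qed.

Lemma card_anti : #|[set A : {set vert t} | antichain A]| = cnt Qanti t.
Proof. by rewrite card_sets; apply: eq_in_count => a /subs_sub Ha; rewrite /= antichain_toSet. Qed.

Lemma card_cut : #|[set A : {set vert t} | cutset A]| = cnt Qcut t.
Proof. by rewrite card_sets; apply: eq_in_count => a /subs_sub Ha; rewrite /= cut_toSet. Qed.

Lemma card_vert : #|vert t| = Defs.tsize t.
Proof. by rewrite card_seq_sub ?uniq_vlist // size_vlist. Qed.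

End Bridge.

Lemma Fall_prod (R : comNzRingType) (f g : rtree -> R) ts :
  Fall (fun s => f s = g s) ts -> (\prod_(s <- ts) f s = \prod_(s <- ts) g s)%R.
Proof.
elim: ts => [|s r IH] /=; first by rewrite !big_nil.
by case=> E H; rewrite !big_cons E IH.
Qed.

Local Open Scope ring_scope.

Lemma leaf0 : cnt Qmax (Node [::]) = 1%N /\ cnt Qmnl (Node [::]) = 0%N /\
  cnt Qanti (Node [::]) = 2%N /\ cnt Qcut (Node [::]) = 1%N /\
  count (leafL (vlist (Node [::]))) (vlist (Node [::])) = 1%N.
Proof. by vm_compute. Qed.

Lemma P11 t : Pev (1 : int) 1 t = (cnt Qmax t)%:R.
Proof.
elim/rtree_ind2: t => -[_ | s r IH]; first by rewrite Pev0 (proj1 leaf0).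
by rewrite PevE prodPE (Fall_prod IH) cnt_max expr1n natrD natr_prod addrC.
Qed.

Lemma P01 t : Pev (0 : int) 1 t = (cnt Qmnl t)%:R.
Proof.
elim/rtree_ind2: t => -[_ | s r IH]; first by rewrite Pev0 (proj1 (proj2 leaf0)).
by rewrite PevE prodPE (Fall_prod IH) cnt_mnl expr1n natrD natr_prod addrC.
Qed.

Lemma P21 t : Pev (2 : int) 1 t = (cnt Qanti t)%:R.
Proof.
elim/rtree_ind2: t => -[_ | s r IH]; first by rewrite Pev0 (proj1 (proj2 (proj2 leaf0))).
by rewrite PevE prodPE (Fall_prod IH) cnt_anti expr1n natrD natr_prod addrC.
Qed.

Lemma P12 t : Pev (1 : int) 2 t = (cnt Qcut t)%:R.
Proof.
elim/rtree_ind2: t => -[_ | s r IH]; first by rewrite Pev0 (proj1 (proj2 (proj2 (proj2 leaf0)))).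
rewrite PevE prodPE (Fall_prod IH) cnt_cut natrD natr_prod addrC natrX.
by [].
Qed.

Lemma PX0 t : Pev ('X : {poly int}) 0 t = 'X ^+ count (leafL (vlist t)) (vlist t).
Proof.
elim/rtree_ind2: t => -[_ | s r IH]; first by rewrite Pev0 (proj2 (proj2 (proj2 (proj2 leaf0)))).
rewrite PevE prodPE (Fall_prod IH) leaves_root expr0n.
have -> : (tsum (s :: r) == 0%N) = false by case: (s).
by rewrite addr0 prodrXr.
Qed.

Lemma P22 t : Pev (2 : int) 2 t = 2 ^+ Defs.tsize t.
Proof.
elim/rtree_ind2: t => -[_ | s r IH]; first by rewrite Pev0.
rewrite PevE prodPE (Fall_prod IH) prodrXr -tsumE tsizeE exprS.
by rewrite mulr_natl mulr2n.
Qed.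

Theorem proposition2p11 (t : rtree) :
  Pev (1 : int) 1 t = (#|[set A : {set vert t} | maximal_antichain A]|)%:R /\
  Pev ('X : {poly int}) 0 t = 'X ^+ #|[set u : vert t | leaf u]| /\
  Pev (0 : int) 1 t =
    (#|[set A : {set vert t} | maximal_antichain A & [forall u in A, ~~ leaf u]]|)%:R /\
  Pev (2 : int) 1 t = (#|[set A : {set vert t} | antichain A]|)%:R /\
  Pev (1 : int) 2 t = (#|[set A : {set vert t} | cutset A]|)%:R /\
  Pev (2 : int) 2 t = 2 ^+ #|vert t|.
Proof.
rewrite card_max card_mnl card_anti card_cut card_leaves card_vert.
by rewrite P11 PX0 P01 P21 P12 P22.
Qed.
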